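(* Let $G$ be a graph on $n$ vertices belonging to $\mathcal{H}_7^{+}$, and let $\alpha$ be its corner rank. Then (i) $G^{(\alpha-3)}$ is (isomorphic to) $H_7$; (ii) $G$ is of type 1; (iii) the capture time of $G$ is $n-4$.
   Context: All graphs are finite, nonempty, and reflexive (every vertex has a loop). $N[v]$ is the closed neighborhood of $v$ (including $v$). For distinct $v,w$, $w$ strictly corners $v$ if $N[v]\subsetneq N[w]$; $v$ is then a strict corner. A vertex dominates a set if adjacent to all its vertices. Corner ranking: set $G^{(1)}=G$, $k=1$. If $G^{(k)}$ is a clique, give all its vertices rank $k$ and stop. Else if $G^{(k)}$ has no strict corners, give all its vertices rank $\infty$ and stop. Else give every strict corner of $G^{(k)}$ rank $k$, delete them to get $G^{(k+1)}$ (induced subgraph), increase $k$ and repeat. The corner rank is the largest rank of a vertex; $X_k$ is the set of rank-$k$ vertices. A graph of finite corner rank $\alpha\ge2$ is of type 1 if some (equivalently every) vertex of rank $\alpha$ dominates $V(G^{(\alpha-1)})$, and of type 0 otherwise. Cops and robbers: a cop chooses a vertex, then the robber; they alternate moves, cop first, moving to an adjacent vertex or staying; the cop wins upon occupying the robber's vertex. $G$ is cop-win if the cop can force a win; its capture time is the minimum number of cop moves (not counting initial placement) that guarantees capture. (Known: $G$ is cop-win iff its corner rank is finite, and a type-$r$ graph of corner rank $\alpha$ has capture time $\alpha-r$.) The rank cardinality vector of $G$ is $(x_\alpha,\dots,x_1)$ with $x_k=|X_k|$; $G$ realizes it. $H_7$ is the graph on $a_1,a_2,b_1,b_2,c_1,c_2,d$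 with edges $a_1a_2,a_1b_1,a_1b_2,a_2b_1,a_2b_2,a_2c_1,a_1c_2,b_1c_1,b_1c_2,b_1d,b_2c_1,b_2c_2,c_1d,c_2d$. For $k\ge0$, $\mathcal{H}_7^{+k}$ is the set of cop-win graphs realizing the vector $(2,2,2,1,\dots,1)$ of length $4+k$, and $\mathcal{H}_7^+=\bigcup_{k\ge0}\mathcal{H}_7^{+k}$. *)

(* Defs.v *)
From mathcomp Require Import all_boot.
Set Implicit Arguments. Unset Strict Implicit. Unset Printing Implicit Defensive.

(* A graph is given by a finite vertex type T and an adjacency relation
   e : rel T, assumed reflexive (loops) and symmetric in the theorem.
   Induced subgraphs are represented by vertex sets S : {set T}. *)
Section Graphs.
Variables (T : finType) (e : rel T).

Definition nbhd (S : {set T}) (v : T) : {set T} := [set w in S | e v w].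

Definition strict_corner (S : {set T}) (v : T) : bool :=
  (v \in S) && [exists w in S, (w != v) && (nbhd S v \proper nbhd S w)].

Definition corners (S : {set T}) : {set T} := [set v | strict_corner S v].

Definition is_clique (S : {set T}) : bool :=
  [forall x in S, forall y in S, e x y].

Definition corner_step (S : {set T}) : {set T} := S :\: corners S.

(* G^(k), for k >= 1:  G^(1) = V(G), G^(k+1) = G^(k) minus its strict corners *)
Definition Gk (k : nat) : {set T} := iter k.-1 corner_step [set: T].

Definition corner_rank (alpha : nat) : Prop :=
  1 <= alpha /\ is_clique (Gk alpha) /\
  (forall j, 1 <= j -> j < alpha -> ~~ is_clique (Gk j)).

Definition Xk (alpha j : nat) : {set T} :=
  if (1 <= j) && (j < alpha) then corners (Gk j)
  else if j == alpha then Gk alpha else set0.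

Definition rank_card_vector (alpha : nat) : seq nat :=
  [seq #|Xk alpha j| | j <- rev (iota 1 alpha)].

Definition realizes (v : seq nat) : Prop :=
  exists alpha, corner_rank alpha /\ rank_card_vector alpha = v.

Definition type1 (alpha : nat) : Prop :=
  2 <= alpha /\
  exists2 v, v \in Xk alpha alpha & {in Gk alpha.-1, forall u, e v u}.

(* Cops and robbers: cop_wins m c r  <=> cop at c, robber at r, cop to move,
   the cop can force capture within m more cop moves. *)
Fixpoint cop_wins (m : nat) (c r : T) : bool :=
  if m is m'.+1 then
    (c == r) || [exists c', e c c' &&
        ((c' == r) || [forall r', e r r' ==> cop_wins m' c' r'])]
  else c == r.

Definition capture_within (m : nat) : Prop :=
  exists c0, forall r0, cop_wins m c0 r0.

Definition capture_time (m : nat) : Prop :=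
  capture_within m /\ forall m', m' < m -> ~ capture_within m'.

End Graphs.

(* H_7 on 'I_7 : a1=0, a2=1, b1=2, b2=3, c1=4, c2=5, d=6 *)
Definition H7_edges : seq (nat * nat) :=
  [:: (0,1); (0,2); (0,3); (1,2); (1,3); (1,4); (0,5);
      (2,4); (2,5); (2,6); (3,4); (3,5); (4,6); (5,6)].

Definition H7 : rel 'I_7 := fun i j =>
  (i == j) || ((val i, val j) \in H7_edges) || ((val j, val i) \in H7_edges).

Definition induced_iso (T U : finType) (e : rel T) (S : {set T}) (h : rel U) : Prop :=
  exists g : U -> T, [/\ injective g, [set g i | i : U] = S &
                        forall i j, e (g i) (g j) = h i j].

Definition in_H7plusk (T : finType) (e : rel T) (k : nat) : Prop :=
  realizes e ([:: 2; 2; 2] ++ nseq k.+1 1).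

Definition in_H7plus (T : finType) (e : rel T) : Prop :=
  exists k, in_H7plusk e k.

(* Main.v *)
Require Import Defs.
From mathcomp Require Import all_boot zify.
Set Implicit Arguments. Unset Strict Implicit. Unset Printing Implicit Defensive.

Section Gen.
Variables (T : finType) (e : rel T).
Hypotheses (e_refl : reflexive e) (e_sym : symmetric e).
Implicit Types (S : {set T}) (x y v w z r c : T).

Lemma cw_ext (e1 e2 : rel T) : e1 =2 e2 ->
  forall m c r, cop_wins e1 m c r = cop_wins e2 m c r.
Proof.
move=> H; elim=> [//|m IH] c r /=.
congr (_ || _); apply: eq_existsb => c'; rewrite H; congr (_ && (_ || _)).
by apply: eq_forallb => r'; rewrite H IH.
Qed.

Lemma cw_mono (f : rel T) m c r : cop_wins f m c r -> cop_wins f m.+1 c r.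
Proof.
elim: m c r => [|m IH] c r /=; first by move=> ->.
case/orP=> [->//|/existsP [c' /andP [hc /orP [h|/forallP h]]]].
  by apply/orP; right; apply/existsP; exists c'; rewrite hc h.
apply/orP; right; apply/existsP; exists c'; rewrite hc /=; apply/orP; right.
by apply/forallP => r'; apply/implyP => hr; apply: IH; exact: (implyP (h r') hr).
Qed.

Lemma cw_mono_le (f : rel T) m m' c r : m <= m' -> cop_wins f m c r -> cop_wins f m' c r.
Proof.
move=> /subnKC <-; elim: (m' - m) => [|d IH]; first by rewrite addn0.
by move=> h; rewrite addnS; apply: cw_mono; apply: IH.
Qed.

Lemma in_nbhd S v w : (w \in nbhd e S v) = (w \in S) && e v w.
Proof. by rewrite /nbhd inE. Qed.

Lemma cs_sub S : corner_step e S \subset S.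
Proof. by rewrite /corner_step subDset subsetUr. Qed.

Lemma in_cs S x : (x \in corner_step e S) = (x \in S) && ~~ strict_corner e S x.
Proof.
rewrite /corner_step /corners !inE andbC; case xS: (x \in S) => //=.
Qed.

Definition domw (S : {set T}) (x : T) : T :=
  [arg max_(w > x | (w \in S) && (nbhd e S x \subset nbhd e S w)) #|nbhd e S w|].

Definition rf S x := if strict_corner e S x then domw S x else x.

Lemma domwP S x : x \in S ->
  [/\ domw S x \in S, nbhd e S x \subset nbhd e S (domw S x) &
      forall w, w \in S -> nbhd e S x \subset nbhd e S w ->
        #|nbhd e S w| <= #|nbhd e S (domw S x)| ].
Proof.
move=> xS; rewrite /domw; case: arg_maxnP; first by rewrite xS subxx.
move=> w /andP [wS hw] hmax; split=> // w' w'S hw'; apply: hmax; by rewrite w'S hw'.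
Qed.

Lemma rf_in S x : x \in S -> rf S x \in corner_step e S.
Proof.
move=> xS; rewrite /rf; case sx: (strict_corner e S x); last by rewrite in_cs xS sx.
have [wS hxw hmax] := domwP xS.
rewrite in_cs wS /=; apply/negP => /andP [_ /existsP [w1 /andP [w1S /andP [_ hp]]]].
have := hmax w1 w1S (subset_trans hxw (proper_sub hp)).
by rewrite leqNgt proper_card.
Qed.

Lemma rf_nb S x : x \in S -> nbhd e S x \subset nbhd e S (rf S x).
Proof.
move=> xS; rewrite /rf; case: (strict_corner e S x) => //.
by have [] := domwP xS.
Qed.

Lemma rf_S S x : x \in S -> rf S x \in S.
Proof. by move=> xS; apply: (subsetP (cs_sub S)); apply: rf_in. Qed.

Lemma rf_id S x : x \in corner_step e S -> rf S x = x.
Proof. by rewrite in_cs /rf => /andP [_ /negbTE ->]. Qed.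

Lemma rf_adj S x : x \in S -> e (rf S x) x.
Proof.
move=> xS; have := subsetP (rf_nb xS) x; rewrite !in_nbhd xS e_refl.
by move=> /(_ isT) /andP [].
Qed.

Lemma rf_hom S x y : x \in S -> y \in S -> e x y -> e (rf S x) (rf S y).
Proof.
move=> xS yS exy.
have h1 : e (rf S x) y.
  by have := subsetP (rf_nb xS) y; rewrite !in_nbhd yS exy => /(_ isT) /andP [].
have h2 : e (rf S y) (rf S x).
  have := subsetP (rf_nb yS) (rf S x); rewrite !in_nbhd rf_S // e_sym h1.
  by move=> /(_ isT) /andP [].
by rewrite e_sym.
Qed.

Definition L (i : nat) : {set T} := iter i (corner_step e) setT.

Lemma L_sub i j : i <= j -> L j \subset L i.
Proof.
move=> /subnKC <-; elim: (j - i) => [|d IH]; first by rewrite addn0.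
by rewrite addnS /L iterS; apply: subset_trans IH; apply: cs_sub.
Qed.

Lemma LS i : L i.+1 = corner_step e (L i).
Proof. by rewrite /L iterS. Qed.

Lemma Gk_L k : Gk e k = L k.-1.
Proof. by []. Qed.

Fixpoint Fr (i : nat) (x : T) : T := if i is i'.+1 then rf (L i') (Fr i' x) else x.

Lemma Fr_in i x : Fr i x \in L i.
Proof.
elim: i => [|i IH]; first by rewrite /L inE.
by rewrite LS; apply: rf_in.
Qed.

Lemma Fr_id i y : y \in L i -> Fr i y = y.
Proof.
elim: i => [//|i IH] hy /=.
have hy' : y \in L i by apply: (subsetP (L_sub (leqnSn i))).
rewrite IH // rf_id //; by rewrite -LS.
Qed.

Lemma Fr_hom i x y : e x y -> e (Fr i x) (Fr i y).
Proof.
elim: i => [//|i IH] /= h; apply: rf_hom; [exact: Fr_in | exact: Fr_in | exact: IH].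
Qed.

Lemma lower i c r : r \in L i -> ~~ e (Fr i c) r -> ~~ cop_wins e i.+1 c r.
Proof.
elim: i c r => [|i IH] c r rL hne.
  rewrite /=; apply/negP => /orP [/eqP cr|/existsP [c' /andP [hc /orP [/eqP cr|/forallP h]]]].
  - by move: hne; rewrite cr e_refl.
  - by move: hne; rewrite /= -cr hc.
  - have := implyP (h r) (e_refl r) => /eqP cr; by move: hne; rewrite /= -cr hc.
set S := L i.
have rS : r \in S by apply: (subsetP (L_sub (leqnSn i))).
have Fr_r : Fr i.+1 r = r by apply: Fr_id.
rewrite [cop_wins _ _ _ _]/=; apply/negP => /orP [/eqP cr|/existsP [c' /andP [hc h]]].
  by move: hne; rewrite cr Fr_r e_refl.
have hc' : e (Fr i.+1 c) (Fr i.+1 c') by apply: Fr_hom.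
case/orP: h => [/eqP cr|/forallP h].
  by move: hne; rewrite cr in hc'; rewrite Fr_r in hc'; rewrite hc'.
set x := Fr i c'.
have xS : x \in S by apply: Fr_in.
have fx : Fr i.+1 c' = rf S x by [].
have : [exists r', [&& r' \in S, e r r' & ~~ e x r']].
  apply: contraT => /existsPn hall.
  have hsub : nbhd e S r \subset nbhd e S (rf S x).
    apply: subset_trans (rf_nb xS); apply/subsetP => z; rewrite !in_nbhd => /andP [zS erz].
    by rewrite zS /=; move: (hall z); rewrite zS erz /= negbK.
  case: (eqVneq r (rf S x)) => [rfx|nrfx].
    by move: hne; rewrite rfx -fx hc'.
  move: rL; rewrite LS in_cs rS /= => /negP hn; exfalso; apply: hn.
  case hp: (nbhd e S r \proper nbhd e S (rf S x)).
    rewrite /strict_corner rS /=; apply/existsP; exists (rf S x).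
    by rewrite rf_S //= eq_sym nrfx.
  move: hp; rewrite properE hsub /= => /negbFE hsub2.
  have fcS : Fr i.+1 c \in S by apply: (subsetP (L_sub (leqnSn i))); apply: Fr_in.
  have := subsetP hsub2 (Fr i.+1 c); rewrite !in_nbhd fcS e_sym -fx hc' => /(_ isT) /andP [_].
  by rewrite e_sym (negbTE hne).
case/existsP => r' /and3P [r'S err' hx].
exact: (negP (IH c' r' r'S hx) (implyP (h r') err')).
Qed.


Definition eS S : rel T := fun x y => [&& x \in S, y \in S & e x y].

Lemma cw_base S c r : c \in S -> r \in S -> e c r -> cop_wins (eS S) 1 c r.
Proof.
move=> h0 h1 h2 /=; apply/orP; right; apply/existsP; exists r.
by rewrite /eS h0 h1 h2 eqxx.
Qed.

Lemma up S m c r : c \in corner_step e S -> r \in S ->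
  cop_wins (eS (corner_step e S)) m c (rf S r) -> cop_wins (eS S) m.+1 c r.
Proof.
elim: m c r => [|m IH] c r cS rS.
  have cS0 : c \in S := subsetP (cs_sub S) c cS.
  move=> /eqP ->; apply: cw_base; [exact: rf_S | exact: rS | exact: rf_adj].
have cS0 : c \in S := subsetP (cs_sub S) c cS.
move=> /orP [/eqP -> | /existsP [c' /andP [hc h]]].
  apply: (@cw_mono_le _ 1) => //; apply: cw_base; [exact: rf_S | exact: rS | exact: rf_adj].
move: hc => /and3P [_ c'S' ecc'].
have c'S : c' \in S := subsetP (cs_sub S) c' c'S'.
apply/orP; right; apply/existsP; exists c'; apply/andP; split; first by rewrite /eS cS0 c'S ecc'.
apply/orP; right; apply/forallP => r'; apply/implyP => /and3P [_ r'S err'].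
case/orP: h => [/eqP cr | /forallP h]; change (cop_wins (eS S) m.+1 c' r').
  apply: (@cw_mono_le _ 1) => //; apply: cw_base => //.
  have := subsetP (rf_nb rS) r'; rewrite !in_nbhd r'S err' cr => /(_ isT) /andP [].
  by [].
apply: IH => //; apply: (implyP (h (rf S r'))).
by rewrite /eS !rf_in //= rf_hom.
Qed.

Lemma dom_clique S y : y \in S -> {in S, forall z, e y z} -> is_clique e (corner_step e S).
Proof.
move=> yS hdom; apply/forallP => x; apply/implyP => xc; apply/forallP => z; apply/implyP => zc.
have xS : x \in S := subsetP (cs_sub S) x xc.
have zS : z \in S := subsetP (cs_sub S) z zc.
case: (eqVneq x y) => [->|nxy]; first by apply: hdom.
have hsub : nbhd e S x \subset nbhd e S y.
  by apply/subsetP => w; rewrite !in_nbhd => /andP [wS _]; rewrite wS hdom.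
case hp: (nbhd e S x \proper nbhd e S y).
  move: xc; rewrite in_cs xS /= => /negP; case; rewrite /strict_corner xS /=.
  by apply/existsP; exists y; rewrite yS eq_sym nxy hp.
move: hp; rewrite properE hsub /= => /negbFE hsub2.
have := subsetP hsub2 z; rewrite !in_nbhd zS hdom // => /(_ isT) /andP [].
by [].
Qed.

Lemma capture_type1 alpha : corner_rank e alpha -> 3 <= alpha ->
  forall v, v \in Gk e alpha -> {in Gk e alpha.-1, forall u, e v u} ->
  capture_time e alpha.-1.
Proof.
move=> [a1 [acl anc]] a3 v vG hv.
have vL : forall j, j <= alpha.-1 -> v \in L j.
  by move=> j hj; apply: (subsetP (L_sub hj)); rewrite -Gk_L.
have upd : forall d, d <= alpha - 2 -> forall r, r \in L (alpha - 2 - d) ->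
    cop_wins (eS (L (alpha - 2 - d))) d.+1 v r.
  elim=> [|d IH] hd r rL.
    apply: cw_base => //; first by apply: vL; lia.
    by apply: hv; rewrite Gk_L; have -> : alpha.-1.-1 = alpha - 2 - 0 by lia.
  have hj : (alpha - 2 - d.+1).+1 = alpha - 2 - d by lia.
  apply: up.
  - by rewrite -LS hj; apply: vL; lia.
  - done.
  - rewrite -LS hj; apply: IH; first lia.
    by rewrite -hj LS; apply: rf_in.
split.
  exists v => r.
  have h0 := upd (alpha - 2) (leqnn _) r; rewrite subnn in h0.
  have h1 : r \in L 0 by rewrite /L inE.
  have -> : alpha.-1 = (alpha - 2).+1 by lia.
  rewrite -(@cw_ext (eS (L 0)) e); first exact: h0 h1.
  by move=> x y; rewrite /eS /L !inE.
move=> m hm [c0 hc0].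
set y := Fr (alpha - 3) c0.
have : [exists r, (r \in L (alpha - 3)) && ~~ e y r].
  apply: contraT => /existsPn hall.
  have hn : ~~ is_clique e (Gk e alpha.-1) by apply: anc; lia.
  move: hn; rewrite Gk_L.
  have -> : alpha.-1.-1 = (alpha - 3).+1 by lia.
  rewrite LS (@dom_clique _ y) //; first exact: Fr_in.
  by move=> z zL; move: (hall z); rewrite zL /= negbK.
case/existsP => r /andP [rL hr].
have := lower rL hr; rewrite (@cw_mono_le _ m) //; first by lia.
Qed.

End Gen.

Definition pairs7 : seq (nat * nat) := flatten [seq [seq (i, j) | i <- iota 0 j] | j <- iota 1 6].
Definition grn (l : seq bool) : nat -> nat -> bool := fun i j =>
  (i == j) || nth false l (index (minn i j, maxn i j) pairs7).
Fixpoint all_bools (n : nat) : seq (seq bool) :=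
  if n is n'.+1 then [seq b :: l | b <- [:: true; false], l <- all_bools n'] else [:: [::]].
Definition maps7 : seq (seq nat) :=
  [:: [:: 0;1;3;2;4;5;6]; [:: 0;1;2;3;4;5;6]; [:: 0;1;3;2;5;4;6]; [:: 0;1;2;3;5;4;6]].
Definition nb (a : nat -> nat -> bool) n v := [seq w <- iota 0 n | a v w].
Definition sub_l (x y : seq nat) := all (fun z => z \in y) x.
Definition sc a n v := (v < n) && has (fun w => (w != v) && sub_l (nb a n v) (nb a n w) && ~~ sub_l (nb a n w) (nb a n v)) (iota 0 n).
Definition lvl a n m := all (fun i => ((i < n) && ~~ sc a n i) == (i < m)) (iota 0 7).
Definition H7n (i j : nat) := (i == j) || ((i, j) \in H7_edges) || ((j, i) \in H7_edges).
Definition Qn a :=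
  has (fun m => all (fun i => all (fun j => a (nth 0 m i) (nth 0 m j) == H7n i j) (iota 0 7)) (iota 0 7)) maps7
  && has (fun v => all (fun u => a v u) (iota 0 4)) (iota 0 2).
Definition cond2 l := nth false l 0 && lvl (grn l) 4 2.
Definition cond1 l := lvl (grn l) 6 4.
Definition cond0 l := lvl (grn l) 7 6.
Definition checker :=
  all (fun l1 => if cond2 l1 then
    all (fun l2 => if cond1 (l1 ++ l2) then
      all (fun l3 => if cond0 (l1 ++ l2 ++ l3) then Qn (grn (l1 ++ l2 ++ l3)) else true)
        (all_bools 6) else true) (all_bools 9) else true) (all_bools 6).

Lemma checker_ok : checker. Proof. vm_compute. reflexivity. Qed.

Lemma all_boolsP n l : size l = n -> l \in all_bools n.
Proof.
elim: n l => [|n IH] [|b l] // [hs].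
apply: (@allpairs_f _ _ _ (fun b l => b :: l)); [by case: b | exact: IH].
Qed.

Definition agree (a a' : nat -> nat -> bool) n := forall i j, i < n -> j < n -> a i j = a' i j.

Lemma sc_ext a a' n v : agree a a' n -> sc a n v = sc a' n v.
Proof.
move=> h; rewrite /sc; case vn: (v < n) => //=.
have hnb : forall w, w < n -> nb a n w = nb a' n w.
  move=> w wn; apply: eq_in_filter => z; rewrite mem_iota add0n => /andP [_ zn]; exact: h.
apply: eq_in_has => w; rewrite mem_iota add0n => /andP [_ wn].
by rewrite !hnb.
Qed.

Lemma lvl_ext a a' n m : agree a a' n -> lvl a n m = lvl a' n m.
Proof.
move=> h; apply: eq_all => i; by rewrite (sc_ext i h).
Qed.

Lemma maps7_okP m : m \in maps7 ->
  [/\ forall i, i < 7 -> nth 0 m i < 7, size m = 7 & uniq m].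
Proof.
have H : all (fun m => all (fun k => k < 7) m && (size m == 7) && uniq m) maps7 by [].
move=> hm; have /andP [/andP [ha /eqP hs] hu] := allP H m hm; split=> //.
by move=> i hi; apply: (allP ha); apply: mem_nth; rewrite hs.
Qed.

Lemma Qn_ext a a' : agree a a' 7 -> Qn a = Qn a'.
Proof.
move=> h; rewrite /Qn; congr (_ && _).
  apply: eq_in_has => m hm.
  have [hm7 hsz _] := maps7_okP hm.
  apply: eq_in_all => i; rewrite mem_iota add0n => /andP [_ hi].
  apply: eq_in_all => j; rewrite mem_iota add0n => /andP [_ hj].
  by rewrite h // hm7.
apply: eq_in_has => v; rewrite mem_iota add0n => /andP [_ vn]; apply: eq_in_all => u.
rewrite mem_iota add0n => /andP [_ un]; apply: h; lia.
Qed.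

Lemma idx_lt n : n \in [:: 4; 6; 7] ->
  forall i j, i < n -> j < n -> i != j ->
  index (minn i j, maxn i j) pairs7 < (if n == 4 then 6 else if n == 6 then 15 else 21).
Proof.
have H : forall n, n \in [:: 4; 6; 7] -> all (fun i => all (fun j => (i != j) ==>
  (index (minn i j, maxn i j) pairs7 < (if n == 4 then 6 else if n == 6 then 15 else 21)))
  (iota 0 n)) (iota 0 n).
  by move=> n0; rewrite !inE => /or3P [] /eqP ->; vm_compute.
move=> hn i j hi hj hij; have := allP (allP (H n hn) i _) j _.
by rewrite hij; apply; rewrite mem_iota add0n.
Qed.

Lemma pairs7_nth i j : i < 7 -> j < 7 -> i != j ->
  nth (0, 0) pairs7 (index (minn i j, maxn i j) pairs7) = (minn i j, maxn i j).
Proof.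
move=> hi hj hij; apply: nth_index; rewrite -index_mem.
by have := idx_lt (n := 7) isT hi hj hij.
Qed.

Lemma fin_main (a : nat -> nat -> bool) :
  (forall i, i < 7 -> a i i) -> (forall i j, i < 7 -> j < 7 -> a i j = a j i) ->
  a 0 1 -> lvl a 4 2 -> lvl a 6 4 -> lvl a 7 6 -> Qn a.
Proof.
move=> hr hs h01 h4 h6 h7.
set l := [seq a p.1 p.2 | p <- pairs7].
have sl : size l = 21 by rewrite size_map.
have hag : agree a (grn l) 7.
  move=> i j hi hj; rewrite /grn; case: (eqVneq i j) => [->|hij]; first by rewrite hr.
  rewrite /= (nth_map (0, 0)); last by rewrite (idx_lt (n := 7)).
  rewrite pairs7_nth //; change (a i j = a (minn i j) (maxn i j)); case: (leqP i j) => hle.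
    by [].
  by rewrite hs.
have hagn : forall n k, n \in [:: 4; 6; 7] ->
    k = (if n == 4 then 6 else if n == 6 then 15 else 21) -> agree (grn (take k l)) (grn l) n.
  move=> n k hn hk i j hi hj; rewrite /grn; case: (eqVneq i j) => //= hij.
  by rewrite nth_take // hk; apply: idx_lt.
have h7' : forall n m, n \in [:: 4; 6; 7] -> lvl a n m = lvl (grn l) n m.
  move=> n m hn; apply: lvl_ext => i j hi hj; apply: hag.
    by move: hn hi; rewrite !inE => /or3P [] /eqP -> ; lia.
  by move: hn hj; rewrite !inE => /or3P [] /eqP -> ; lia.
set l1 := take 6 l. set l2 := take 9 (drop 6 l). set l3 := drop 15 l.
have e12 : l1 ++ l2 = take 15 l.
  by rewrite /l1 /l2 -takeD.
have e123 : l1 ++ l2 ++ l3 = l by rewrite catA e12 cat_take_drop.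
have c2 : cond2 l1.
  apply/andP; split; first by rewrite /l1 nth_take // (nth_map (0,0)).
  by rewrite (lvl_ext _ (hagn 4 6 isT erefl)) -h7'.
have c1 : cond1 (l1 ++ l2).
  by rewrite /cond1 e12 (lvl_ext _ (hagn 6 15 isT erefl)) -h7'.
have c0 : cond0 (l1 ++ l2 ++ l3) by rewrite /cond0 e123 -h7'.
have s1 : size l1 = 6 by rewrite size_takel // sl.
have s2 : size l2 = 9 by rewrite size_takel // size_drop sl.
have s3 : size l3 = 6 by rewrite size_drop sl.
have := allP checker_ok l1 (all_boolsP s1); rewrite c2 => /allP h.
have := h l2 (all_boolsP s2); rewrite c1 => /allP {}h.
have := h l3 (all_boolsP s3); rewrite c0 e123.
by rewrite (Qn_ext hag).
Qed.

Section Fin.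
Variables (T : finType) (e : rel T).
Hypotheses (e_refl : reflexive e) (e_sym : symmetric e).
Variables (s : seq T) (x0 : T).
Hypotheses (us : uniq s) (ss : size s = 7).

Definition aT i j := e (nth x0 s i) (nth x0 s j).
Definition B n : {set T} := [set x | x \in take n s].

Lemma mB n i : i < 7 -> (nth x0 s i \in B n) = (i < n).
Proof. by move=> hi; rewrite inE in_take ?mem_nth ?ss // index_uniq ?ss. Qed.

Lemma exB n x : x \in B n -> exists i, [/\ i < n, i < 7 & x = nth x0 s i].
Proof.
rewrite inE => hx; have xs := mem_take hx; exists (index x s).
by rewrite -in_take // -ss index_mem nth_index.
Qed.

Lemma in_nb n v z : (z \in nb aT n v) = (z < n) && e (nth x0 s v) (nth x0 s z).
Proof. by rewrite /nb mem_filter mem_iota add0n andbC. Qed.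

Lemma nb_sub n v w : n <= 7 -> v < n -> w < n ->
  (nbhd e (B n) (nth x0 s v) \subset nbhd e (B n) (nth x0 s w)) = sub_l (nb aT n v) (nb aT n w).
Proof.
move=> n7 vn wn; apply/idP/idP => h.
  apply/allP => z; rewrite !in_nb => /andP [zn avz]; rewrite zn /=.
  have := subsetP h (nth x0 s z); rewrite !in_nbhd mB; last lia.
  by rewrite zn avz => /(_ isT).
apply/subsetP => y; rewrite !in_nbhd => /andP [yB ey].
have [z [zn z7 hy]] := exB yB; subst y; rewrite mB // zn /=.
by have := allP h z; rewrite !in_nb zn ey => /(_ isT).
Qed.

Lemma sc_T n v : n <= 7 -> v < n -> strict_corner e (B n) (nth x0 s v) = sc aT n v.
Proof.
move=> n7 vn; rewrite /strict_corner /sc mB; last lia.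
rewrite vn /=; apply/existsP/hasP.
  case=> w /andP [wB /andP [hw hp]]; have [z [zn z7 hz]] := exB wB; subst w.
  exists z; first by rewrite mem_iota add0n.
  move: hw hp; rewrite properE !nb_sub // nth_uniq ?ss //; last lia.
  by move=> -> ->.
case=> z; rewrite mem_iota add0n => /andP [_ zn] /andP [/andP [hzv h1] h2].
exists (nth x0 s z); rewrite mB; last lia.
rewrite zn /= nth_uniq ?ss //; try lia.
by rewrite hzv properE !nb_sub // h1 h2.
Qed.

Lemma lvl_T n m : n <= 7 -> corner_step e (B n) = B m -> lvl aT n m.
Proof.
move=> n7 H; apply/allP => i; rewrite mem_iota add0n => /andP [_ hi].
have := congr1 (fun A : {set T} => nth x0 s i \in A) H; rewrite /= in_cs !mB //.
case hin: (i < n); last by move=> <-.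
by rewrite sc_T // => ->.
Qed.

Lemma fin_T : corner_step e (B 7) = B 6 -> corner_step e (B 6) = B 4 ->
  corner_step e (B 4) = B 2 -> e (nth x0 s 0) (nth x0 s 1) ->
  induced_iso e (B 7) H7 /\ exists2 v, v \in B 2 & {in B 4, forall u, e v u}.
Proof.
move=> h7 h6 h4 h01.
have := @fin_main aT (fun i _ => e_refl _) (fun i j _ _ => e_sym _ _) h01
  (lvl_T (isT : 4 <= 7) h4) (lvl_T (isT : 6 <= 7) h6) (lvl_T (isT : 7 <= 7) h7).
case/andP => /hasP [m hm /allP hiso] /hasP [v hv /allP hdom].
have [hm7 hsz hu] := maps7_okP hm.
move: hv; rewrite mem_iota add0n => /andP [_ v2].
split; last first.
  exists (nth x0 s v); first by rewrite mB //; lia.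
  move=> u /exB [k [k4 k7 ->]]; apply: (hdom k); by rewrite mem_iota add0n.
exists (fun i : 'I_7 => nth x0 s (nth 0 m i)); split.
- move=> i j /eqP; rewrite nth_uniq ?ss ?hm7 // nth_uniq ?hsz // => /eqP h.
  exact: val_inj.
- have hinj : injective (fun i : 'I_7 => nth x0 s (nth 0 m i)).
    move=> i j /eqP; rewrite nth_uniq ?ss ?hm7 // nth_uniq ?hsz // => /eqP h.
    exact: val_inj.
  apply/eqP; rewrite eqEcard; apply/andP; split.
    by apply/subsetP => y /imsetP [i _ ->]; rewrite mB ?hm7.
  rewrite card_imset // card_ord /B take_oversize ?ss //.
  by rewrite cardsE; move/card_uniqP: us => ->; rewrite ss.
- move=> i j; have := allP (hiso i _) j _.
  rewrite !mem_iota add0n !ltn_ord => /(_ isT isT) /eqP.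
  by rewrite /aT => ->.
Qed.

End Fin.

Section Main.
Variables (T : finType) (e : rel T).
Hypotheses (e_refl : reflexive e) (e_sym : symmetric e).

Lemma cr_uniq a b : corner_rank e a -> corner_rank e b -> a = b.
Proof.
move=> [a1 [ac an]] [b1 [bc bn]]; case: (ltngtP a b) => // h.
  by move: (bn a a1 h); rewrite ac.
by move: (an b b1 h); rewrite bc.
Qed.

Lemma GkS j : 0 < j -> Gk e j.+1 = corner_step e (Gk e j).
Proof. by case: j => // j _; rewrite !Gk_L /= LS. Qed.

Lemma card_step (S : {set T}) : #|S| = #|corner_step e S| + #|corners e S|.
Proof.
have sub : corners e S \subset S.
  by apply/subsetP => x; rewrite /corners inE => /andP [].
rewrite /corner_step cardsD (setIidPr sub) subnK //; exact: subset_leq_card.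
Qed.

Lemma setcat (l : seq T) (A A' : {set T}) : A \subset A' -> [set x | x \in l] = A ->
  [set x | x \in l ++ enum (A' :\: A)] = A'.
Proof.
move=> sub hl; apply/setP => x; rewrite inE mem_cat mem_enum inE.
have := congr1 (fun S : {set T} => x \in S) hl; rewrite inE /= => ->.
by case xA: (x \in A) => //=; rewrite (subsetP sub).
Qed.

End Main.

Theorem theorem4p2 (T : finType) (e : rel T)
  (e_refl : reflexive e) (e_sym : symmetric e) (T_nonempty : 0 < #|T|)
  (alpha : nat) :
  in_H7plus e -> corner_rank e alpha ->
  [/\ induced_iso e (Gk e (alpha - 3)) H7,
      type1 e alpha &
      capture_time e (#|T| - 4)].
Proof.
move=> [k [beta [crb vec]]] cra.
have ab := cr_uniq cra crb; subst beta.
have hsize : alpha = k + 4.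
  have := congr1 size vec; rewrite /rank_card_vector size_map size_rev size_iota /=.
  by rewrite size_nseq; lia.
have hnth : forall p, p < alpha -> #|Xk e alpha (alpha - p)| = if p < 3 then 2 else 1.
  move=> p hp; have := congr1 (nth 0) vec => /(congr1 (fun f => f p)).
  rewrite /rank_card_vector (nth_map 0) ?size_rev ?size_iota // nth_rev ?size_iota //.
  rewrite nth_iota; last lia.
  have -> : 1 + (alpha - p.+1) = alpha - p by lia.
  move=> ->; case: (ltnP p 3) => hp3.
    by case: p hp hp3 => [|[|[|]]].
  rewrite nth_cat (_ : size [:: 2; 2; 2] = 3) // ltnNge hp3 /=.
  have : p - 3 < k.+1 by lia.
  case: (p - 3) => [|q] //= hq; rewrite nth_nseq; case: ifP => // /negbT; lia.
have hX : forall p, 0 < p -> p < alpha -> Xk e alpha (alpha - p) = corners e (Gk e (alpha - p)).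
  move=> p p0 hp; rewrite /Xk ifT //; apply/andP; split; lia.
have hXa : Xk e alpha alpha = Gk e alpha by rewrite /Xk ltnn andbF eqxx.
have hcard : forall p, p < alpha -> #|Gk e (alpha - p)| = if p < 3 then (p.*2).+2 else p + 4.
  elim=> [|p IH] hp.
    by move: (hnth 0 hp); rewrite subn0 hXa.
  have hj : (alpha - p.+1).+1 = alpha - p by lia.
  rewrite (card_step e) -GkS; last lia.
  rewrite hj IH; last lia.
  rewrite -(hX p.+1) // hnth //; case: (ltnP p 3) => h1; case: (ltnP p.+1 3) => h2 //; try lia.
have hT : #|T| - 4 = alpha.-1.
  have := hcard (alpha - 1); rewrite (_ : alpha - (alpha - 1) = 1); last lia.
  rewrite /Gk /= cardsT => ->; [case: ifP; lia | lia].
rewrite hT.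
set A0 := Gk e (alpha - 3). set A1 := Gk e (alpha - 2).
set A2 := Gk e (alpha - 1). set A3 := Gk e alpha.
have cA0 : #|A0| = 7 by rewrite /A0 hcard //; lia.
have cA1 : #|A1| = 6 by rewrite /A1 hcard //; lia.
have cA2 : #|A2| = 4 by rewrite /A2 hcard //; lia.
have cA3 : #|A3| = 2 by move: (hcard 0 (ltac:(lia))); rewrite subn0.
have e01 : A1 = corner_step e A0 by rewrite /A1 /A0 -GkS; [congr Gk; lia | lia].
have e12 : A2 = corner_step e A1 by rewrite /A1 /A2 -GkS; [congr Gk; lia | lia].
have e23 : A3 = corner_step e A2 by rewrite /A3 /A2 -GkS; [congr Gk; lia | lia].
have s01 : A1 \subset A0 by rewrite e01 cs_sub.
have s12 : A2 \subset A1 by rewrite e12 cs_sub.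
have s23 : A3 \subset A2 by rewrite e23 cs_sub.
have cD : forall (A A' : {set T}), A \subset A' -> size (enum (A' :\: A)) = #|A'| - #|A|.
  by move=> A A' h; rewrite -cardE cardsD (setIidPr h).
set s3 := enum A3. set s2 := enum (A2 :\: A3).
set s1 := enum (A1 :\: A2). set s0 := enum (A0 :\: A1).
set s := ((s3 ++ s2) ++ s1) ++ s0.
have z3 : size s3 = 2 by rewrite -cardE.
have z2 : size s2 = 2 by rewrite cD // cA2 cA3.
have z1 : size s1 = 2 by rewrite cD // cA1 cA2.
have z0 : size s0 = 1 by rewrite cD // cA0 cA1.
have ss : size s = 7 by rewrite !size_cat z3 z2 z1 z0.
have B2 : B s 2 = A3.
  rewrite /B /s -!catA take_size_cat //; apply/setP => x; by rewrite inE mem_enum.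
have B4 : B s 4 = A2.
  rewrite /B /s -catA take_size_cat ?size_cat ?z3 ?z2 //.
  by apply: setcat => //; rewrite -B2 /B /s -!catA take_size_cat.
have B6 : B s 6 = A1.
  rewrite /B /s take_size_cat ?size_cat ?z3 ?z2 ?z1 //.
  by apply: setcat => //; rewrite -B4 /B /s -catA take_size_cat ?size_cat ?z3 ?z2.
have B7 : B s 7 = A0.
  rewrite /B take_oversize ?ss //.
  by apply: setcat => //; rewrite -B6 /B /s take_size_cat ?size_cat ?z3 ?z2 ?z1.
have us : uniq s.
  apply/card_uniqP; rewrite ss.
  have -> : #|s| = #|B s 7| by rewrite /B take_oversize ?ss // cardsE.
  by rewrite B7.
have /card_gt0P [x0 _] := T_nonempty.
have h7 : corner_step e (B s 7) = B s 6 by rewrite B7 B6 e01.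
have h6 : corner_step e (B s 6) = B s 4 by rewrite B6 B4 e12.
have h4 : corner_step e (B s 4) = B s 2 by rewrite B4 B2 e23.
have h01 : e (nth x0 s 0) (nth x0 s 1).
  have hx : nth x0 s 0 \in A3 by rewrite -B2 (mB x0 us ss).
  have hy : nth x0 s 1 \in A3 by rewrite -B2 (mB x0 us ss).
  case: cra => _ [cl _]; move: cl.
  by move=> /forallP /(_ (nth x0 s 0)) /implyP /(_ hx) /forallP /(_ (nth x0 s 1)) /implyP /(_ hy).
have [iso [v vB vdom]] := fin_T e_refl e_sym us ss (x0 := x0) h7 h6 h4 h01.
have vA3 : v \in Gk e alpha by rewrite -/A3 -B2.
have vdom' : {in Gk e alpha.-1, forall u, e v u}.
  by move=> u; rewrite -subn1 -/A2 -B4; apply: vdom.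
split.
- by move: iso; rewrite B7.
- split; first lia.
  by exists v; first by rewrite hXa.
- apply: (capture_type1 e_refl e_sym cra _ vA3 vdom'); lia.
Qed.
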